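(* Suppose $\sigma_n,\sigma\in D(\mathbb R^d,X)$. Then $d_S(\sigma_n,\sigma)\to0$ if and only if there exist $\lambda_n\in\Lambda$ such that $\gamma(\lambda_n)\to0$ and $r(\sigma_n(x),\sigma(\lambda_n(x)))\to0$ uniformly over $x$ in compact subsets of $\mathbb R^d$.
   Context: $(X,r)$ is a complete separable metric space with $r\le1$; $d\ge1$. Order on $\mathbb R^d$: $x\le y$ iff $x_i\le y_i$ for all $i$; $|x|_\infty=\max_i|x_i|$. $D=D(\mathbb R^d,X)$ is the set of functions $\sigma:\mathbb R^d\to X$ such that for every bounded rectangle $[a,b)$ and $\varepsilon>0$ there are finite partitions $a_i=s_i^0<\dots<s_i^{m_i}=b_i$ of each coordinate axis with $\sup\{r(\sigma(x),\sigma(y)): s_i^{k_i}\le x_i,y_i<s_i^{k_i+1}\ (1\le i\le d)\}\le\varepsilon$ for every multi-index $k$. For $u>0$, $[x]_u=((x_1\wedge u)\vee(-u),\dots,(x_d\wedge u)\vee(-u))$. $\Lambda$ is the set of maps $\lambda(x)=(\lambda_1(x_1),\dots,\lambda_d(x_d))$ with each $\lambda_i:\mathbb R\to\mathbb R$ a bijective strictly increasing Lipschitz function, such that $\gamma(\lambda)=\gamma_0(\lambda)+\gamma_1(\lambda)<\infty$, where $\gamma_0(\lambda)=\sum_{i=1}^d\sup_{s\ne t}\big|\log\frac{\lambda_i(t)-\lambda_i(s)}{t-s}\big|$ and $\gamma_1(\lambda)=\int_0^\infty e^{-u}\big(1\wedge\sup_{x\in\mathbb R^d}|[\lambda(x)]_u-[x]_u|_\infty\big)du$.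 For $\rho,\sigma\in D$, $\lambda\in\Lambda$, $u>0$: $d(\rho,\sigma,\lambda,u)=\sup_x r(\rho([x]_u),\sigma([\lambda(x)]_u))$, and $d_S(\rho,\sigma)=\inf_{\lambda\in\Lambda}\{\gamma(\lambda)\vee\int_0^\infty e^{-u}d(\rho,\sigma,\lambda,u)du\}$. *)

(* Defs.v *)
(* R : realType plays the role of the real line,
   points of R^d are row vectors 'rV[R]_d (coordinates x ord0 i), so that
   the usual (normed) topology, hence [compact], is available on R^d. *)
From mathcomp Require Import all_boot all_order all_algebra.
From mathcomp Require Import all_classical all_reals all_analysis.
Set Implicit Arguments.
Unset Strict Implicit.
Unset Printing Implicit Defensive.
Import Order.TTheory GRing.Theory Num.Theory.
Import numFieldTopology.Exports numFieldNormedType.Exports.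
Local Open Scope classical_set_scope.
Local Open Scope ring_scope.

Section Skorokhod.
Variables (R : realType) (d : nat).

Definition sup_norm (x : 'rV[R]_d) : R := \big[Num.max/0]_(i < d) `|x ord0 i|.

Definition clip (u : R) (x : 'rV[R]_d) : 'rV[R]_d :=
  \row_(i < d) Num.max (Num.min (x ord0 i) u) (- u).

Definition tchange (lam : 'I_d -> R -> R) (x : 'rV[R]_d) : 'rV[R]_d :=
  \row_(i < d) lam i (x ord0 i).

Definition gamma0 (lam : 'I_d -> R -> R) : \bar R :=
  (\sum_(i < d)
     ereal_sup [set e : \bar R | exists s t : R, s != t /\
                  e = (`| ln ((lam i t - lam i s) / (t - s)) |)%:E])%E.

Definition gamma1 (lam : 'I_d -> R -> R) : \bar R :=
  (\int[lebesgue_measure]_(u in [set u : R | (0 < u)%R])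
     ((expR (- u))%:E *
      Order.min 1%E
        (ereal_sup [set (sup_norm (clip u (tchange lam x) - clip u x))%:E
                   | x in [set: 'rV[R]_d]])))%E.

Definition gamma (lam : 'I_d -> R -> R) : \bar R := (gamma0 lam + gamma1 lam)%E.

Definition in_Lambda (lam : 'I_d -> R -> R) : Prop :=
  (forall i, bijective (lam i)) /\
  (forall i (s t : R), s < t -> lam i s < lam i t) /\
  (forall i, exists L : R, forall s t : R,
       `|lam i t - lam i s| <= L * `|t - s|) /\
  (gamma lam < +oo)%E.

Variables (X : Type) (r : X -> X -> R).

Definition in_D (s : 'rV[R]_d -> X) : Prop :=
  forall (a b : 'rV[R]_d), (forall i, a ord0 i < b ord0 i) ->
  forall eps : R, 0 < eps ->
  exists (m : 'I_d -> nat) (p : 'I_d -> nat -> R),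
    (forall i, p i 0%N = a ord0 i /\ p i (m i) = b ord0 i /\
               (forall k, (k < m i)%N -> p i k < p i k.+1)) /\
    (forall k : 'I_d -> nat, (forall i, (k i < m i)%N) ->
     forall x y : 'rV[R]_d,
       (forall i, p i (k i) <= x ord0 i < p i (k i).+1) ->
       (forall i, p i (k i) <= y ord0 i < p i (k i).+1) ->
       r (s x) (s y) <= eps).

Definition dist_u (rho sig : 'rV[R]_d -> X) (lam : 'I_d -> R -> R) (u : R)
  : \bar R :=
  ereal_sup [set (r (rho (clip u x)) (sig (clip u (tchange lam x))))%:E
            | x in [set: 'rV[R]_d]].

Definition dS (rho sig : 'rV[R]_d -> X) : \bar R :=
  ereal_inf [set Order.max (gamma lam)
                   (\int[lebesgue_measure]_(u in [set u : R | (0 < u)%R])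
                      ((expR (- u))%:E * dist_u rho sig lam u))%E
            | lam in in_Lambda].

Definition is_metric : Prop :=
  (forall x y, r x y = 0 <-> x = y) /\
  (forall x y, r x y = r y x) /\
  (forall x y z, r x z <= r x y + r y z).

Definition complete_metric : Prop :=
  forall u : nat -> X,
    (forall eps : R, 0 < eps -> exists N, forall m n, (N <= m)%N -> (N <= n)%N ->
                                   r (u m) (u n) < eps) ->
    exists l : X, forall eps : R, 0 < eps -> exists N, forall n, (N <= n)%N ->
                                   r (u n) l < eps.

Definition separable_metric : Prop :=
  exists q : nat -> X, forall (x : X) (eps : R), 0 < eps -> exists n, r x (q n) < eps.

End Skorokhod.

(* Main.v *)
Require Import Defs.
From mathcomp Require Import all_boot all_order all_algebra.
From mathcomp Require Import all_classical all_reals all_analysis.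
From mathcomp Require Import lra measurable_realfun exponential_distribution.
Import Order.TTheory GRing.Theory Num.Theory.
Import numFieldTopology.Exports numFieldNormedType.Exports.
Import HBNNSimple.
Local Open Scope classical_set_scope.
Local Open Scope ring_scope.
Set Implicit Arguments.
Unset Strict Implicit.

Lemma le_integral_gen (R : realType) (A D : set R) (f g : R -> \bar R) :
  (forall x, A x -> (0 <= g x)%E) -> (forall x, D x -> (0 <= f x)%E) ->
  (forall x, A x -> D x /\ (g x <= f x)%E) ->
  (\int[lebesgue_measure]_(x in A) g x <= \int[lebesgue_measure]_(x in D) f x)%E.
Proof.
move=> g0 f0 gf.
rewrite [X in (X <= _)%E]ge0_integralE // [X in (_ <= X)%E]ge0_integralE //.
apply: le_ereal_sup => _ [h hg <-]; exists h => // x.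
apply: (le_trans (hg x)); rewrite /patch; case: ifPn; rewrite ?inE => Ax.
  by have [Dx gfx] := gf x Ax; rewrite ifT ?inE.
by case: ifPn => // /[!inE] Dx; exact: f0.
Qed.

Lemma int_small_pt (R : realType) (f : R -> \bar R) (b c : R) : 0 < b -> 0 <= c ->
  (forall u, 0 < u -> (0 <= f u)%E) ->
  (\int[lebesgue_measure]_(u in [set u : R | (0 < u)%R]) ((expR (- u))%:E * f u)
     < (c * expR (- (b + 1)))%:E)%E ->
  exists u, b <= u <= b + 1 /\ (f u < c%:E)%E.
Proof.
move=> b0 c0 f0 hI.
case: (pselect (exists u, b <= u <= b + 1 /\ (f u < c%:E)%E)) => // hn.
exfalso; move: hI; apply/negP; rewrite -leNgt.
have hc : forall u, b <= u <= b + 1 -> (c%:E <= f u)%E.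
  move=> u hu; rewrite leNgt; apply/negP => hlt; apply: hn; by exists u.
set k := c * expR (- (b + 1)).
have -> : k%:E = (\int[lebesgue_measure]_(u in `[b, (b + 1)%R]%classic) (cst k%:E) u)%E.
  rewrite integral_cst //= lebesgue_measure_itv /= lte_fin ltrDl ltr01.
  by rewrite -EFinD addrAC subrr add0r mule1.
apply: le_integral_gen.
- by move=> x _ /=; rewrite lee_fin mulr_ge0 // expR_ge0.
- by move=> x x0; rewrite mule_ge0 // ?lee_fin ?expR_ge0 // f0.
move=> x; rewrite /= in_itv /= => /andP[bx xb]; split.
  exact: lt_le_trans bx.
rewrite /k EFinM muleC /=; apply: lee_pmul.
- by rewrite lee_fin expR_ge0.
- by rewrite lee_fin.
- by rewrite lee_fin ler_expR lerN2.
- by apply: hc; rewrite bx xb.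
Qed.

Lemma sup_norm_ge (R : realType) (d : nat) (x : 'rV[R]_d) i :
  `|x ord0 i| <= sup_norm x.
Proof. by rewrite /sup_norm (bigD1 i) //= le_max lexx. Qed.

Lemma sup_norm_ge0 (R : realType) (d : nat) (x : 'rV[R]_d) : 0 <= sup_norm x.
Proof. by rewrite /sup_norm; apply: bigmax_ge_id. Qed.

Lemma clipE (R : realType) (d : nat) u (x : 'rV[R]_d) i :
  clip u x ord0 i = Num.max (Num.min (x ord0 i) u) (- u).
Proof. by rewrite /clip mxE. Qed.

Lemma tchangeE (R : realType) (d : nat) lam (x : 'rV[R]_d) i :
  tchange lam x ord0 i = lam i (x ord0 i).
Proof. by rewrite /tchange mxE. Qed.

Lemma gamma0_ge0 (R : realType) (d : nat) (lam : 'I_d -> R -> R) :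
  (0 <= gamma0 lam)%E.
Proof.
rewrite /gamma0; apply: sume_ge0 => i _.
apply: (le_trans _ (ereal_sup_ubound _)); last first.
  exists 0, 1; split; [by rewrite eq_sym oner_eq0|reflexivity].
by rewrite lee_fin.
Qed.

Lemma gamma1_ge0 (R : realType) (d : nat) (lam : 'I_d -> R -> R) :
  (0 <= gamma1 lam)%E.
Proof.
rewrite /gamma1; apply: integral_ge0 => u _.
rewrite mule_ge0 // ?lee_fin ?expR_ge0 // le_min lee01 /=.
apply: (le_trans _ (ereal_sup_ubound _)); last by exists 0.
by rewrite lee_fin sup_norm_ge0.
Qed.

Lemma gamma_ge0 (R : realType) (d : nat) (lam : 'I_d -> R -> R) :
  (0 <= gamma lam)%E.
Proof. by rewrite /gamma adde_ge0 ?gamma0_ge0 ?gamma1_ge0. Qed.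

Lemma gamma1_le (R : realType) (d : nat) (lam : 'I_d -> R -> R) :
  (gamma1 lam <= gamma lam)%E.
Proof. by rewrite /gamma leeDr ?gamma0_ge0. Qed.

Lemma r_ge0 (R : realType) (X : Type) (r : X -> X -> R) :
  is_metric r -> forall x y, 0 <= r x y.
Proof.
move=> [h0 [hs ht]] x y.
have := ht x y x; rewrite (proj2 (h0 x x) erefl) (hs y x) => h.
by rewrite -(pmulr_rge0 _ (ltr0Sn _ 1)) mulr2n mulrDl !mul1r.
Qed.

Lemma dist_u_ge0 (R : realType) (d : nat) (X : Type) (r : X -> X -> R) rho sig
  lam u : is_metric r -> (0 <= dist_u (d:=d) r rho sig lam u)%E.
Proof.
move=> hm; apply: (le_trans _ (ereal_sup_ubound _)); last by exists 0.
by rewrite lee_fin r_ge0.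
Qed.

Lemma dist_u_le1 (R : realType) (d : nat) (X : Type) (r : X -> X -> R) rho sig
  lam u : (forall x y, r x y <= 1) -> (dist_u (d:=d) r rho sig lam u <= 1)%E.
Proof.
by move=> h1; apply: ge_ereal_sup => _ [x _ <-]; rewrite lee_fin.
Qed.

Lemma dist_u_ge (R : realType) (d : nat) (X : Type) (r : X -> X -> R) rho sig
  lam u x : ((r (rho (clip u x)) (sig (clip u (tchange lam x))))%:E
     <= dist_u (d:=d) r rho sig lam u)%E.
Proof. by apply: ereal_sup_ubound; exists x. Qed.

Lemma integ_ge0 (R : realType) (d : nat) (X : Type) (r : X -> X -> R) rho sig
  lam : is_metric r -> (0 <= \int[lebesgue_measure]_(u in [set u : R | (0 < u)%R])
     ((expR (- u))%:E * dist_u (d:=d) r rho sig lam u))%E.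
Proof.
move=> hm; apply: integral_ge0 => u _.
by rewrite mule_ge0 ?lee_fin ?expR_ge0 // dist_u_ge0.
Qed.

Lemma dS_ge0 (R : realType) (d : nat) (X : Type) (r : X -> X -> R) rho sig :
  is_metric r -> (0 <= dS (d:=d) r rho sig)%E.
Proof.
move=> hm; apply: le_ereal_inf_tmp => _ [lam _ <-].
by rewrite le_max gamma_ge0.
Qed.

Lemma dS_le (R : realType) (d : nat) (X : Type) (r : X -> X -> R) rho sig lam :
  in_Lambda lam ->
  (dS (d:=d) r rho sig <= Order.max (gamma lam)
     (\int[lebesgue_measure]_(u in [set u : R | (0 < u)%R])
        ((expR (- u))%:E * dist_u r rho sig lam u)))%E.
Proof. by move=> hl; apply: ereal_inf_lbound; exists lam. Qed.

Lemma cvge0_lt (R : realType) (u : nat -> \bar R) : u @ \oo --> 0%E ->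
  forall e : R, 0 < e -> \forall n \near \oo, (u n < e%:E)%E.
Proof.
move=> /fine_cvgP [hf hc] e e0.
move/cvgrPdist_lt: hc => /(_ e e0) hc.
near=> n.
have fn : u n \is a fin_num by near: n.
rewrite -(fineK fn) lte_fin.
have : `|0 - fine (u n)| < e by near: n.
rewrite sub0r normrN => h; exact: le_lt_trans (ler_norm _) h.
Unshelve. all: by end_near.
Qed.

Lemma cvge0_le (R : realType) (u : nat -> \bar R) : (forall n, (0 <= u n)%E) ->
  (forall e : R, 0 < e -> \forall n \near \oo, (u n <= e%:E)%E) ->
  u @ \oo --> 0%E.
Proof.
move=> u0 hu; apply/fine_cvgP; split.
  have := hu 1 ltr01; apply: filterS => n hn.
  by rewrite ge0_fin_numE // (le_lt_trans hn) // ltry.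
apply/cvgrPdist_le => e e0.
have := hu e e0; apply: filterS => n hn.
have fn : u n \is a fin_num by rewrite ge0_fin_numE // (le_lt_trans hn) // ltry.
rewrite sub0r normrN ger0_norm.
  by rewrite -lee_fin fineK.
by rewrite -lee_fin fineK.
Qed.

Lemma clip_scalar (R : realType) (T u a y : R) : 0 <= T -> T + 1 <= u ->
  `|y| <= T -> `|Num.max (Num.min a u) (- u) - y| < 2^-1 -> `|a| <= T + 2^-1.
Proof.
move=> T0 Tu; rewrite !ler_norml ltr_norml => /andP[y1 y2] /andP[h1 h2].
have [hau|hau] := leP a u; [rewrite (min_l hau) in h1 h2 | rewrite (min_r (ltW hau)) in h1 h2].
  have [hau'|hau'] := leP (-u) a; [rewrite (max_l hau') in h1 h2 | rewrite (max_r (ltW hau')) in h1 h2].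
    by apply/andP; split; lra.
  exfalso; lra.
have hu : - u <= u by lra.
rewrite (max_l hu) in h1 h2; exfalso; lra.
Qed.

Lemma clip_id (R : realType) (d : nat) u (x : 'rV[R]_d) :
  (forall i, `|x ord0 i| <= u) -> clip u x = x.
Proof.
move=> h; apply/rowP => i; rewrite mxE.
have := h i; rewrite ler_norml => /andP[h1 h2].
by rewrite (min_l h2) (max_l h1).
Qed.

Lemma coord_le_norm (R : realType) (d : nat) (x : 'rV[R]_d) i :
  `|x ord0 i| <= `|x|.
Proof.
rewrite [X in _ <= X]/Num.norm /= mx_normrE.
by rewrite (bigD1 (ord0, i)) //= le_max lexx.
Qed.

Lemma compact_coord_bound (R : realType) (d : nat) (K : set 'rV[R]_d) :
  compact K -> exists T, 0 <= T /\ forall x, K x -> forall i, `|x ord0 i| <= T.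
Proof.
move=> hK; have [M [Mr HM]] := compact_bounded hK.
exists (`|M| + 1); split; first by rewrite addr_ge0.
move=> x Kx i; apply: (le_trans (coord_le_norm x i)).
apply: (HM (`|M| + 1)) => //.
by rewrite (le_lt_trans (real_ler_norm Mr)) // ltrDl.
Qed.

Lemma gamma1_small_pt (R : realType) (d : nat) (lam : 'I_d -> R -> R) (b c : R) :
  0 < b -> 0 <= c -> (gamma1 lam < (c * expR (- (b + 1)))%:E)%E ->
  exists u, b <= u <= b + 1 /\
   (Order.min 1%E (ereal_sup [set (sup_norm (clip u (tchange lam x) - clip u x))%:E
                   | x in [set: 'rV[R]_d]]) < c%:E)%E.
Proof.
move=> b0 c0 h.
pose f := fun u => Order.min 1%E (ereal_sup [set (sup_norm (clip u (tchange lam x) - clip u x))%:E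
                   | x in [set: 'rV[R]_d]]).
apply: (@int_small_pt R f b c b0 c0) => //.
move=> u _; rewrite /f le_min lee01 /=.
apply: (le_trans _ (ereal_sup_ubound _)); last by exists 0.
by rewrite lee_fin sup_norm_ge0.
Qed.

Lemma dist_small_pt (R : realType) (d : nat) (X : Type) (r : X -> X -> R) rho sig
  (lam : 'I_d -> R -> R) (b c : R) : is_metric r ->
  0 < b -> 0 <= c ->
  (\int[lebesgue_measure]_(u in [set u : R | (0 < u)%R])
        ((expR (- u))%:E * dist_u r rho sig lam u) < (c * expR (- (b + 1)))%:E)%E ->
  exists u, b <= u <= b + 1 /\ (dist_u r rho sig lam u < c%:E)%E.
Proof.
move=> hm b0 c0 h.
apply: (@int_small_pt R (dist_u r rho sig lam) b c b0 c0) => //.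
by move=> u _; exact: dist_u_ge0.
Qed.

Lemma clipr_id (R : realType) (u a : R) : - u <= a -> a <= u ->
  Num.max (Num.min a u) (- u) = a.
Proof. by move=> h1 h2; rewrite (min_l h2) (max_l h1). Qed.

Lemma clipr_hi (R : realType) (u a : R) : 0 <= u -> u <= a ->
  Num.max (Num.min a u) (- u) = u.
Proof.
move=> u0 h; rewrite (min_r h) max_l //; lra.
Qed.

Lemma clipr_lo (R : realType) (u a : R) : 0 <= u -> a <= - u ->
  Num.max (Num.min a u) (- u) = - u.
Proof.
move=> u0 h; rewrite min_l; last by lra.
by rewrite max_r.
Qed.

Lemma clipr_bound (R : realType) (u a : R) : 0 <= u ->
  `|Num.max (Num.min a u) (- u)| <= u.
Proof.
move=> u0; rewrite ler_norml.
have [h1|h1] := boolP (a <= u); last rewrite -ltNge in h1.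
  have [h2|h2] := boolP (-u <= a); last rewrite -ltNge in h2.
    by rewrite clipr_id // h1 h2.
  by rewrite clipr_lo ?lexx ?(ltW h2) //; apply/andP; split; lra.
by rewrite clipr_hi ?lexx ?(ltW h1) //; apply/andP; split; lra.
Qed.

Lemma clip_scalar2 (R : realType) (T u a y c : R) : 0 <= T -> T + 1 <= u ->
  `|y| <= T -> c <= 2^-1 -> `|Num.max (Num.min a u) (- u) - y| < c -> `|a - y| < c.
Proof.
move=> T0 Tu; rewrite ler_norml => /andP[y1 y2] hc.
have [hau|hau] := boolP (a <= u); last rewrite -ltNge in hau.
  have [hau'|hau'] := boolP (-u <= a); last rewrite -ltNge in hau'.
  by rewrite (clipr_id hau' hau).
  rewrite clipr_lo; [|lra|lra]; rewrite ltr_norml => /andP[h1 h2]; exfalso; lra.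
rewrite clipr_hi; [|lra|lra]; rewrite ltr_norml => /andP[h1 h2]; exfalso; lra.
Qed.

Lemma clip_cross (R : realType) (l : R -> R) (u c a : R) : 0 < u -> 0 < c ->
  c <= u / 2 -> c <= 2^-1 ->
  (forall s t, s < t -> l s < l t) ->
  (forall t, `|t| <= u + 1 -> `|l t - t| <= c) ->
  `|l (Num.max (Num.min a u) (- u))| <= u + 1 /\
  `|Num.max (Num.min (l a) u) (- u)| <= u + 1 /\
  (l (Num.max (Num.min a u) (- u)) = Num.max (Num.min (l a) u) (- u) \/
   (`|l (Num.max (Num.min a u) (- u)) - u| <= c /\
    `|Num.max (Num.min (l a) u) (- u) - u| <= c) \/
   (`|l (Num.max (Num.min a u) (- u)) + u| <= c /\
    `|Num.max (Num.min (l a) u) (- u) + u| <= c)).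
Proof.
move=> u0 c0 cu c1 hl hb.
have hQ : `|Num.max (Num.min (l a) u) (- u)| <= u + 1.
  by apply: le_trans (clipr_bound _ (ltW u0)) _; rewrite lerDl.
have [hau|hau] := boolP (a <= u); last rewrite -ltNge in hau.
  have [hau'|hau'] := boolP (-u <= a); last rewrite -ltNge in hau'.
    rewrite (clipr_id hau' hau).
    have ha : `|a| <= u + 1 by rewrite ler_norml; apply/andP; split; lra.
    have := hb a ha; rewrite ler_norml => /andP[h1 h2].
    have hP : `|l a| <= u + 1 by rewrite ler_norml; apply/andP; split; lra.
    split => //; split => //.
    have [hlu|hlu] := boolP (l a <= u); last rewrite -ltNge in hlu.
      have [hlu'|hlu'] := boolP (-u <= l a); last rewrite -ltNge in hlu'.
      by left; rewrite clipr_id.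
      rewrite clipr_lo; [|lra|lra]; right; right.
      by rewrite !ler_norml; split; apply/andP; split; lra.
    rewrite clipr_hi; [|lra|lra]; right; left.
    by rewrite !ler_norml; split; apply/andP; split; lra.
  have hlt := hl _ _ hau'.
  rewrite (clipr_lo _ (ltW hau')); last lra.
  have := hb (- u); rewrite normrN ger0_norm ?(ltW u0) // lerDl ler01 ler_norml => /(_ isT) /andP[h1 h2].
  split; first by rewrite ler_norml; apply/andP; split; lra.
  split => //; right; right.
  rewrite !ler_norml; split; first by apply/andP; split; lra.
  have [hlu|hlu] := boolP (-u <= l a); last rewrite -ltNge in hlu.
    rewrite clipr_id; [|lra|lra]; apply/andP; split; lra.
  rewrite clipr_lo; [|lra|lra]; apply/andP; split; lra.
have hlt := hl _ _ hau.
rewrite (clipr_hi _ (ltW hau)); last lra.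
have := hb u; rewrite ger0_norm ?(ltW u0) // lerDl ler01 ler_norml => /(_ isT) /andP[h1 h2].
split; first by rewrite ler_norml; apply/andP; split; lra.
split => //; right; left.
rewrite !ler_norml; split; first by apply/andP; split; lra.
have [hlu|hlu] := boolP (l a <= u); last rewrite -ltNge in hlu.
  rewrite clipr_id; [|lra|lra]; apply/andP; split; lra.
rewrite clipr_hi; [|lra|lra]; apply/andP; split; lra.
Qed.

Lemma cell_exists (R : realType) (m : nat) (p : nat -> R) (t : R) :
  p 0%N <= t -> t < p m -> exists k, (k < m)%N /\ p k <= t < p k.+1.
Proof.
move=> h0 hm; apply: contrapT => hn.
have hall : forall j, (j <= m)%N -> p j <= t.
  elim=> [//|j ih] hj.
  have pj := ih (ltnW hj).
  rewrite leNgt; apply/negP => hlt; apply: hn; exists j; split => //.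
  by rewrite pj hlt.
by have := hall m (leqnn m); rewrite leNgt hm.
Qed.

Lemma same_cell (R : realType) (P P1 x y v del : R) :
  del <= `|P - v| -> del <= `|P1 - v| -> P <= x < P1 ->
  `|x - v| < del -> `|y - v| < del -> P <= y < P1.
Proof.
rewrite !ler_normr !ltr_norml => /orP[h1|h1] /orP[h2|h2] /andP[x1 x2]
  /andP[x3 x4] /andP[y1 y2]; apply/andP; split; lra.
Qed.

Lemma D_bad (R : realType) (d : nat) (X : Type) (r : X -> X -> R)
  (sig : 'rV[R]_d -> X) (hsig : in_D r sig) :
  exists B : set R, measurable B /\ (@lebesgue_measure R) B = 0%E /\
  forall u : R, 0 < u -> ~ B u -> forall eps : R, 0 < eps ->
  exists del : R, 0 < del /\ forall p q : 'rV[R]_d,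
   (forall j, `|p ord0 j| <= u + 1 /\ `|q ord0 j| <= u + 1 /\
     (p ord0 j = q ord0 j \/ (`|p ord0 j - u| < del /\ `|q ord0 j - u| < del) \/
      (`|p ord0 j + u| < del /\ `|q ord0 j + u| < del))) ->
   r (sig p) (sig q) <= eps.
Proof.
pose a (N : nat) : 'rV[R]_d := \row_(i < d) (- (N%:R + 1)).
pose b (N : nat) : 'rV[R]_d := \row_(i < d) (N%:R + 1).
have hab N : forall i, a N ord0 i < b N ord0 i.
  by move=> i; rewrite !mxE; have := ler0n R N; lra.
have heps k : 0 < k.+1%:R^-1 :> R by rewrite invr_gt0.
pose Q N k (mp : ('I_d -> nat) * ('I_d -> nat -> R)) :=
    (forall i, mp.2 i 0%N = a N ord0 i /\ mp.2 i (mp.1 i) = b N ord0 i /\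
               (forall k, (k < mp.1 i)%N -> mp.2 i k < mp.2 i k.+1)) /\
    (forall kk : 'I_d -> nat, (forall i, (kk i < mp.1 i)%N) ->
     forall x y : 'rV[R]_d,
       (forall i, mp.2 i (kk i) <= x ord0 i < mp.2 i (kk i).+1) ->
       (forall i, mp.2 i (kk i) <= y ord0 i < mp.2 i (kk i).+1) ->
       r (sig x) (sig y) <= k.+1%:R^-1).
have hex N k : exists mp, Q N k mp.
  have [m [p h]] := hsig (a N) (b N) (hab N) _ (heps k).
  by exists (m, p).
have /choice [F hF] : forall N, exists f, forall k, Q N k (f k).
  by move=> N; have [f hf] := choice (hex N); exists f.
pose g (z : nat * nat * 'I_d * nat * bool) : R :=
  if z.2 then (F z.1.1.1.1 z.1.1.1.2).2 z.1.1.2 z.1.2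
  else - (F z.1.1.1.1 z.1.1.1.2).2 z.1.1.2 z.1.2.
pose B := \bigcup_(z in [set: nat * nat * 'I_d * nat * bool]) [set g z].
have cB : countable B.
  by apply: bigcup_countable; [exact: countableP | move=> z _; exact: countable1].
exists B; split; first by apply: countable_measurable => //; exact: measurable_set1.
split; first exact: countable_lebesgue_measure0.
move=> u u0 nBu eps eps0.
have [N _ hN] := nbhs_infty_gtr u.
have hNu : u < N%:R := hN N (leqnn N).
have [k _ hk] := near_infty_natSinv_lt (PosNum eps0).
have hke : k.+1%:R^-1 < eps := hk k (leqnn k).
have [hP1 hP2] := hF N k.
set m := (F N k).1 in hP1 hP2.
set P := (F N k).2 in hP1 hP2.
have Pne : forall i j, P i j != u /\ P i j != - u.
  move=> i j; split; apply/eqP => h; apply: nBu.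
    by exists ((((N, k), i), j), true) => //=; rewrite /g /= -/P h.
  by exists ((((N, k), i), j), false) => //=; rewrite /g /= -/P h opprK.
pose del := \big[Num.min/2^-1]_(i < d) \big[Num.min/2^-1]_(j < (m i).+1)
   Num.min `|P i j - u| `|P i j + u|.
have del0 : 0 < del.
  apply: (big_ind (fun x => 0 < x)) => [|x y hx hy|i _]; first by rewrite invr_gt0.
    by rewrite lt_min hx hy.
  apply: (big_ind (fun x => 0 < x)) => [|x y hx hy|j _]; first by rewrite invr_gt0.
    by rewrite lt_min hx hy.
  have [h1 h2] := Pne i j.
  by rewrite lt_min !normr_gt0 subr_eq0 h1 addr_eq0 h2.
have delle : forall i j, (j <= m i)%N -> del <= `|P i j - u| /\ del <= `|P i j + u|.
  move=> i j hj.
  have hj' : (j < (m i).+1)%N by [].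
  have h : del <= Num.min `|P i j - u| `|P i j + u|.
    rewrite /del (bigD1 i) //= ge_min; apply/orP; left.
    by rewrite (bigD1 (Ordinal hj')) //= ge_min lexx.
  by move: h; rewrite le_min => /andP[].
exists del; split => // p q hpq.
have hkk : forall i, exists kk, (kk < m i)%N /\ P i kk <= p ord0 i < P i kk.+1 /\ P i kk <= q ord0 i < P i kk.+1.
  move=> i; have [hp [hq hor]] := hpq i.
  have [e0 [em _]] := hP1 i.
  move: (hp); rewrite ler_norml => /andP[hp1 hp2].
  have hpa : P i 0%N <= p ord0 i by rewrite e0 mxE; lra.
  have hpb : p ord0 i < P i (m i) by rewrite em mxE; lra.
  have [kk [hkm hc]] := cell_exists hpa hpb.
  exists kk; split => //; split => //.
  have [d1 d1'] := delle i kk (ltnW hkm).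
  have [d2 d2'] := delle i kk.+1 hkm.
  case: hor => [<-|[[h1 h2]|[h1 h2]]] //.
    exact: same_cell d1 d2 hc h1 h2.
  by apply: (@same_cell _ _ _ (p ord0 i) _ (- u) del); rewrite ?opprK.
have [kk hkk'] := choice hkk.
apply: (le_trans _ (ltW hke)).
apply: (hP2 kk) => i; first by case: (hkk' i).
  by case: (hkk' i) => _ [].
by case: (hkk' i) => _ [].
Qed.
Lemma lam_near_id (R : realType) (d : nat) (lamn : nat -> 'I_d -> R -> R) :
  (fun n => gamma (lamn n)) @ \oo --> 0%E ->
  forall U c : R, 0 < U -> 0 < c ->
  \forall n \near \oo, forall i t, `|t| <= U -> `|lamn n i t - t| <= c.
Proof.
move=> hg U c U0 c0.
pose c' := Num.min c (2^-1).
have c'0 : 0 < c' by rewrite lt_min c0 invr_gt0 ltr0Sn.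
have c'c : c' <= c by rewrite ge_min lexx.
have c'2 : c' <= 2^-1 by rewrite ge_min lexx orbT.
have hc := cvge0_lt hg (mulr_gt0 c'0 (expR_gt0 (- (U + 1 + 1)))).
apply: filterS hc => n hn i t ht.
have hg1 := le_lt_trans (gamma1_le _) hn.
have U1 : 0 < U + 1 by rewrite addr_gt0.
have [u' [hu' hS]] := gamma1_small_pt U1 (ltW c'0) hg1.
move: hu' => /andP[hu1 hu2].
have hS' : (ereal_sup [set (sup_norm (clip u' (tchange (lamn n) x) - clip u' x))%:E
                   | x in [set: 'rV[R]_d]] < c'%:E)%E.
  move: hS; rewrite gt_min => /orP[h|//].
  by exfalso; move: h; rewrite lte_fin; lra.
pose x : 'rV[R]_d := const_mx t.
have hsn : sup_norm (clip u' (tchange (lamn n) x) - clip u' x) < c'.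
  rewrite -lte_fin; apply: le_lt_trans hS'.
  by apply: ereal_sup_ubound; exists x.
have := le_lt_trans (sup_norm_ge _ i) hsn.
rewrite !mxE.
have ht' : `|t| <= u'.
  by apply: (le_trans ht); apply: le_trans hu1; rewrite lerDl ler01.
move: (ht'); rewrite ler_norml => /andP[t1 t2].
rewrite (clipr_id t1 t2) => h.
apply: ltW; apply: (lt_le_trans _ c'c).
apply: (clip_scalar2 (T := U) (u := u')) => //; exact: ltW.
Qed.

Lemma ep_dom (R : realType) (G : R -> \bar R) :
  (forall u, (0 < u)%R -> (G u <= (expR (- u))%:E)%E) ->
  forall u, ((G \_ [set u : R | (0 < u)%R]) u <= (exponential_pdf 1 u)%:E)%E.
Proof.
move=> hG u; rewrite /patch; case: ifPn; rewrite ?inE /= => hu.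
  rewrite exponential_pdfE ?(ltW hu) //.
  by rewrite mul1r mulN1r; exact: hG.
by rewrite lee_fin exponential_pdf_ge0.
Qed.

Lemma int_ep (R : realType) :
  (\int[@lebesgue_measure R]_x (exponential_pdf 1 x)%:E = 1)%E.
Proof. by rewrite integral_exponential_pdf. Qed.

Lemma sint_eq (R : realType) (h : {nnsfun measurableTypeR R >-> R}) :
  sintegral (@lebesgue_measure R) h = (\int[lebesgue_measure]_x (h x)%:E)%E.
Proof. by rewrite integral_nnsfun // patch_setT. Qed.

Lemma int_cvg0 (R : realType) (F : nat -> R -> \bar R) (B : set R) :
  measurable B -> (@lebesgue_measure R) B = 0%E ->
  (forall n u, (0 < u)%R -> (0 <= F n u)%E /\ (F n u <= 1)%E) ->
  (forall u, (0 < u)%R -> ~ B u -> F ^~ u @ \oo --> 0%E) ->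
  (fun n => \int[@lebesgue_measure R]_(u in [set u : R | (0 < u)%R])
      ((expR (- u))%:E * F n u))%E @ \oo --> 0%E.
Proof.
move=> mB B0 hF hcv.
pose D := [set u : R | (0 < u)%R].
pose G n u := ((expR (- u))%:E * F n u)%E.
have G0 n u : D u -> (0 <= G n u)%E.
  by move=> Du; rewrite /G mule_ge0 ?lee_fin ?expR_ge0 //; case: (hF n u Du).
have Gle n u : D u -> (G n u <= (expR (- u))%:E)%E.
  move=> Du; rewrite /G -[X in (_ <= X)%E]mule1; apply: lee_wpmul2l.
    by rewrite lee_fin expR_ge0.
  by case: (hF n u Du).
have Gep n : forall u, ((G n \_ D) u <= (exponential_pdf 1 u)%:E)%E.
  by apply: ep_dom => u; apply: Gle.
have hbound : forall n (h : {nnsfun measurableTypeR R >-> R}), (forall x, ((h x)%:E <= (G n \_ D) x)%E) ->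
    (sintegral (@lebesgue_measure R) h <= 1)%E.
  move=> n h hh; rewrite sint_eq -(int_ep R).
  apply: ge0_le_integral => //.
  - by move=> x _; rewrite lee_fin fun_ge0.
  - by apply/measurable_EFinP.
  - by apply/measurable_EFinP; exact: measurable_exponential_pdf.
  - by move=> x _; apply: le_trans (hh x) (Gep n x).
pose S n := (\int[@lebesgue_measure R]_(u in D) G n u)%E.
have SE n : S n = ereal_sup [set sintegral (@lebesgue_measure R) h |
    h in [set h : {nnsfun measurableTypeR R >-> R} | forall x, ((h x)%:E <= (G n \_ D) x)%E]].
  by rewrite /S ge0_integralE //; exact: G0.
have S0 n : (0 <= S n)%E by apply: integral_ge0 => u; exact: G0.
have S1 n : (S n <= 1)%E.
  by rewrite SE; apply: ge_ereal_sup => _ [h hh <-]; exact: hbound hh.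
have Sfin n : S n \is a fin_num by rewrite ge0_fin_numE // (le_lt_trans (S1 n)) // ltry.
have ex_h : forall n, exists h : {nnsfun measurableTypeR R >-> R}, (forall x, ((h x)%:E <= (G n \_ D) x)%E) /\
    (S n - (n.+1%:R^-1)%:E < sintegral (@lebesgue_measure R) h)%E.
  move=> n; have : S n \is a fin_num by [].
  rewrite SE => hf.
  have hp : 0 < n.+1%:R^-1 :> R by rewrite invr_gt0.
  have [_ [h hh <-] hlt] := ub_ereal_sup_adherent hp hf.
  by exists h; split => //; rewrite SE.
have /choice [h hh] := ex_h.
have mh n : measurable_fun setT (fun x => ((h n x)%:E : \bar R)).
  by apply/measurable_EFinP.
have f_f : {ae (@lebesgue_measure R), forall x, setT x ->
    (fun n => ((h n x)%:E : \bar R)) @ \oo --> (cst 0%E) x}.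
  exists B; split => // x /= hx; apply: contra_notP hx => nBx _.
  apply: cvge0_le => [n|e e0]; first by rewrite lee_fin fun_ge0.
  have [x0|x0] := ltP 0 x.
    have := cvge0_lt (hcv x x0 nBx) e0; apply: filterS => n hn.
    apply: le_trans ((hh n).1 x) _.
    rewrite /patch ifT ?inE //; apply: le_trans (ltW hn).
    rewrite /G -[X in (_ <= X)%E]mul1e; apply: lee_wpmul2r.
      by case: (hF n x x0).
    by rewrite lee_fin -expR0 ler_expR oppr_le0 ltW.
  apply: nearW => n; apply: le_trans ((hh n).1 x) _.
  rewrite /patch ifF ?lee_fin ?(ltW e0) //.
  by apply/negbTE/negP; rewrite in_setE /D /= ltNge x0.
have f_g : {ae (@lebesgue_measure R), forall x n, setT x ->
    (`|(h n x)%:E| <= (exponential_pdf 1 x)%:E)%E}.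
  apply: aeW => x n _; rewrite gee0_abs ?lee_fin ?fun_ge0 //.
  exact: le_trans ((hh n).1 x) (Gep n x).
have ig : (@lebesgue_measure R).-integrable setT (fun x => (exponential_pdf 1 x)%:E).
  exact: integrable_exponential_pdf.
have [_ _ hcv'] := dominated_convergence measurableT mh (measurable_cst _) f_f ig f_g.
rewrite integral0 in hcv'.
apply: cvge0_le => [n|e e0]; first exact: S0.
have e20 : 0 < e / 2 by rewrite divr_gt0.
have h1 := cvge0_lt hcv' e20.
have h2 := near_infty_natSinv_lt (PosNum e20).
near=> n.
have hlt := (hh n).2.
have : (S n < (e / 2)%:E + (n.+1%:R^-1)%:E)%E.
  rewrite -lteBlDr //; apply: (lt_trans hlt); rewrite sint_eq; near: n; exact: h1.
move/ltW/le_trans; apply; rewrite -EFinD lee_fin.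
have : n.+1%:R^-1 < e / 2 by near: n; exact: h2.
move=> h3; rewrite [X in _ <= X](splitr e) lerD2l; exact: ltW.
Unshelve. all: by end_near.
Qed.

Lemma dist_cvg (R : realType) (d : nat) (X : Type) (r : X -> X -> R)
  (hmet : is_metric r)
  (sn : nat -> 'rV[R]_d -> X) (sig : 'rV[R]_d -> X)
  (lamn : nat -> 'I_d -> R -> R) (hL : forall n, in_Lambda (lamn n))
  (hg : (fun n => gamma (lamn n)) @ \oo --> 0%E)
  (hunif : forall K : set 'rV[R]_d, compact K ->
       forall eps : R, 0 < eps ->
       \forall n \near \oo, forall x, K x ->
         r (sn n x) (sig (tchange (lamn n) x)) < eps)
  (u : R) (u0 : 0 < u)
  (hdel : forall eps : R, 0 < eps ->
    exists del : R, 0 < del /\ forall p q : 'rV[R]_d,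
   (forall j, `|p ord0 j| <= u + 1 /\ `|q ord0 j| <= u + 1 /\
     (p ord0 j = q ord0 j \/ (`|p ord0 j - u| < del /\ `|q ord0 j - u| < del) \/
      (`|p ord0 j + u| < del /\ `|q ord0 j + u| < del))) ->
   r (sig p) (sig q) <= eps) :
  (fun n => dist_u r (sn n) sig (lamn n) u) @ \oo --> 0%E.
Proof.
apply: cvge0_le => [n|e e0]; first exact: dist_u_ge0.
have e20 : 0 < e / 2 by rewrite divr_gt0.
have [del [del0 hdel']] := hdel _ e20.
pose c := Num.min (del / 2) (Num.min (u / 2) (2^-1)).
have c0 : 0 < c.
  rewrite !lt_min; apply/and3P; split; [exact: divr_gt0 | exact: divr_gt0 | by rewrite invr_gt0].
have cdel : c < del.
  apply: (le_lt_trans (_ : c <= del / 2)); first by rewrite ge_min lexx.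
  lra.
have cu : c <= u / 2 by rewrite !ge_min lexx orbT.
have c2 : c <= 2^-1 by rewrite !ge_min lexx !orbT.
pose K := [set v : 'rV[R]_d | forall i, `[- u, u]%classic (v ord0 i)].
have hK : compact K.
  by apply: (@rV_compact _ _ (fun=> `[- u, u]%classic)) => i; exact: segment_compact.
have h1 := hunif K hK _ e20.
have h2 := lam_near_id hg (addr_gt0 u0 ltr01) c0.
near=> n.
have hy1 : forall x, K x -> r (sn n x) (sig (tchange (lamn n) x)) < e / 2.
  by near: n; exact: h1.
have hnear : forall i t, `|t| <= u + 1 -> `|lamn n i t - t| <= c by near: n.
apply: ge_ereal_sup => _ [x _ <-]; rewrite lee_fin.
pose y := clip u x.
have Ky : K y.
  move=> i; rewrite /y clipE /= in_itv /=.
  by have := clipr_bound (x ord0 i) (ltW u0); rewrite ler_norml.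
have hy := hy1 y Ky.
have hPQ : r (sig (tchange (lamn n) y)) (sig (clip u (tchange (lamn n) x))) <= e / 2.
  apply: hdel' => j.
  rewrite !tchangeE !clipE tchangeE.
  have [_ [hmono _]] := hL n.
  have [hp [hq hor]] := clip_cross (x ord0 j) u0 c0 cu c2 (hmono j) (hnear j).
  split => //; split => //.
  case: hor => [->|[[h3 h4]|[h3 h4]]]; first by left.
    by right; left; split; apply: le_lt_trans cdel.
  by right; right; split; apply: le_lt_trans cdel.
have [_ [_ htri]] := hmet.
apply: (le_trans (htri _ (sig (tchange (lamn n) y)) _)).
rewrite [X in _ <= X](splitr e); apply: lerD => //; exact: ltW.
Unshelve. all: by end_near.
Qed.

Lemma forward_dir (R : realType) (d : nat) (X : Type) (r : X -> X -> R)
  (hmet : is_metric r) (hr1 : forall x y, r x y <= 1)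
  (sn : nat -> 'rV[R]_d -> X) (sig : 'rV[R]_d -> X) :
  ((fun n => dS r (sn n) sig) @ \oo --> 0%E) ->
  exists lamn : nat -> 'I_d -> R -> R,
    (forall n, in_Lambda (lamn n)) /\
    ((fun n => gamma (lamn n)) @ \oo --> 0%E) /\
    (forall K : set 'rV[R]_d, compact K ->
       forall eps : R, 0 < eps ->
       \forall n \near \oo, forall x, K x ->
         r (sn n x) (sig (tchange (lamn n) x)) < eps).
Proof.
move=> hc.
pose I n lam := (\int[lebesgue_measure]_(u in [set u : R | (0 < u)%R])
        ((expR (- u))%:E * dist_u r (sn n) sig lam u))%E.
have [N0 _ hN0] := cvge0_lt hc ltr01.
have [_ [lam0 hl0 _] _] := ereal_inf_lt (hN0 N0 (leqnn N0)).
pose P n lam := in_Lambda lam /\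
  (Order.max (gamma lam) (I n lam) < dS r (sn n) sig + (n.+1%:R^-1)%:E)%E.
pose lamn n := match pselect (exists lam, P n lam) with
  | left h => projT1 (cid h) | right _ => lam0 end.
have hP : forall n, (N0 <= n)%N -> P n (lamn n).
  move=> n hn; rewrite /lamn; case: pselect => [h|h].
    exact: (projT2 (cid h)).
  exfalso; apply: h.
  have hf : dS r (sn n) sig \is a fin_num.
    by rewrite ge0_fin_numE ?dS_ge0 // (lt_le_trans (hN0 n hn)) // leey.
  have : (dS r (sn n) sig < dS r (sn n) sig + (n.+1%:R^-1)%:E)%E.
    by rewrite lteDl // lte_fin invr_gt0.
  move/ereal_inf_lt => [_ [lam hl <-] hlt]; by exists lam.
have hL : forall n, in_Lambda (lamn n).
  move=> n; rewrite /lamn; case: pselect => [h|_]; last exact: hl0.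
  by case: (projT2 (cid h)).
have ev : forall a : R, 0 < a -> \forall n \near \oo,
    (Order.max (gamma (lamn n)) (I n (lamn n)) < a%:E)%E.
  move=> a a0.
  have a20 : 0 < a / 2 by rewrite divr_gt0.
  have h1 := cvge0_lt hc a20.
  have h2 := near_infty_natSinv_lt (PosNum a20).
  near=> n.
  have hn : (N0 <= n)%N by near: n; exists N0.
  have [_ hlt] := hP n hn.
  apply: (lt_trans hlt).
  have -> : a = a / 2 + a / 2 by rewrite -splitr.
  rewrite EFinD; apply: lteD; first by near: n.
  by rewrite lte_fin; near: n.
exists lamn; split => //; split.
  apply: cvge0_le => [n|e e0]; first exact: gamma_ge0.
  have := ev e e0; apply: filterS => n.
  by rewrite gt_max => /andP[/ltW].
move=> K hK eps eps0.
have [T [T0 hT]] := compact_coord_bound hK.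
have c0 : 0 < 2^-1 * expR (- (T + 1 + 1)) by rewrite mulr_gt0 ?expR_gt0.
have c1 : 0 < eps / 2 * expR (- (T + 1 + 1)) by rewrite mulr_gt0 ?expR_gt0 ?divr_gt0.
near=> n => x Kx.
have h2 : (Order.max (gamma (lamn n)) (I n (lamn n)) < (2^-1 * expR (- (T + 1 + 1)))%:E)%E.
  by near: n; exact: (ev _ c0).
have h1 : (Order.max (gamma (lamn n)) (I n (lamn n)) < (eps / 2 * expR (- (T + 1 + 1)))%:E)%E.
  by near: n; exact: (ev _ c1).
move: h1 h2; rewrite !gt_max => /andP[_ hI] /andP[hg _].
have hg1 := le_lt_trans (gamma1_le _) hg.
have Tp : 0 < T + 1 by rewrite ltr_pwDr.
have h2pos : 0 <= 2^-1 :> R by rewrite invr_ge0.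
have [u' [hu' hS]] := gamma1_small_pt Tp h2pos hg1.
have [u [hu hd]] := dist_small_pt hmet Tp (ltW (divr_gt0 eps0 (ltr0Sn _ 1))) hI.
move: hu hu' => /andP[hu1 hu2] /andP[hu1' hu2'].
have hS' : (ereal_sup [set (sup_norm (clip u' (tchange (lamn n) x) - clip u' x))%:E
                   | x in [set: 'rV[R]_d]] < (2^-1)%:E)%E.
  move: hS; rewrite gt_min => /orP[h|//].
  by exfalso; move: h; rewrite lte_fin; lra.
have hx := hT x Kx.
have hsn : sup_norm (clip u' (tchange (lamn n) x) - clip u' x) < 2^-1.
  rewrite -lte_fin; apply: le_lt_trans hS'.
  by apply: ereal_sup_ubound; exists x.
have hlam : forall i, `|lamn n i (x ord0 i)| <= T + 2^-1.
  have ex : clip u' x = x by apply: clip_id => j; apply: (le_trans (hx j)); lra.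
  move=> i; have := le_lt_trans (sup_norm_ge _ i) hsn.
  rewrite ex !mxE.
  exact: (clip_scalar T0 hu1' (hx i)).
have e1 : clip u x = x by apply: clip_id => j; apply: (le_trans (hx j)); lra.
have e2 : clip u (tchange (lamn n) x) = tchange (lamn n) x.
  by apply: clip_id => j; rewrite tchangeE; apply: (le_trans (hlam j)); lra.
have := le_lt_trans (dist_u_ge r (sn n) sig (lamn n) u x) hd.
rewrite e1 e2 lte_fin => h; apply: (lt_trans h).
by rewrite ltr_pdivrMr // ltr_pMr // ltr1n.
Unshelve. all: by end_near.
Qed.

Lemma backward_dir (R : realType) (d : nat) (X : Type) (r : X -> X -> R)
  (hmet : is_metric r) (hr1 : forall x y, r x y <= 1)
  (sn : nat -> 'rV[R]_d -> X) (sig : 'rV[R]_d -> X) (hsig : in_D r sig)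
  (lamn : nat -> 'I_d -> R -> R) (hL : forall n, in_Lambda (lamn n))
  (hg : (fun n => gamma (lamn n)) @ \oo --> 0%E)
  (hunif : forall K : set 'rV[R]_d, compact K ->
       forall eps : R, 0 < eps ->
       \forall n \near \oo, forall x, K x ->
         r (sn n x) (sig (tchange (lamn n) x)) < eps) :
  ((fun n => dS r (sn n) sig) @ \oo --> 0%E).
Proof.
have [B [mB [B0 hB]]] := D_bad hsig.
have hI := @int_cvg0 R (fun n u => dist_u r (sn n) sig (lamn n) u) B mB B0
  (fun n u _ => conj (dist_u_ge0 _ _ _ _ hmet) (dist_u_le1 _ _ _ _ hr1))
  (fun u u0 nBu => dist_cvg hmet hL hg hunif u0 (hB u u0 nBu)).
apply: cvge0_le => [n|e e0]; first exact: dS_ge0.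
have h1 := cvge0_lt hg e0.
have h2 := cvge0_lt hI e0.
near=> n.
apply: (le_trans (dS_le _ _ _ (hL n))).
rewrite ge_max; apply/andP; split; apply: ltW.
  by near: n.
by near: n.
Unshelve. all: by end_near.
Qed.

Unset Implicit Arguments.

Theorem lemma10p1 (R : realType) (d : nat) (X : Type) (r : X -> X -> R)
  (hd : (0 < d)%N)
  (hmet : is_metric r) (hr1 : forall x y, r x y <= 1)
  (hcomp : complete_metric r) (hsep : separable_metric r)
  (sn : nat -> 'rV[R]_d -> X) (sig : 'rV[R]_d -> X)
  (hsn : forall n, in_D r (sn n)) (hsig : in_D r sig) :
  ((fun n => dS r (sn n) sig) @ \oo --> 0%E) <->
  exists lamn : nat -> 'I_d -> R -> R,
    (forall n, in_Lambda (lamn n)) /\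
    ((fun n => gamma (lamn n)) @ \oo --> 0%E) /\
    (forall K : set 'rV[R]_d, compact K ->
       forall eps : R, 0 < eps ->
       \forall n \near \oo, forall x, K x ->
         r (sn n x) (sig (tchange (lamn n) x)) < eps).
Proof.
split.
  exact: forward_dir.
move=> [lamn [hL [hg hunif]]].
exact: backward_dir hsig lamn hL hg hunif.
Qed.
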